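(* Let $(Z_0,\dots,Z_H)$ be a process on an abstract state space $\mathcal{Z}$, fix $t\in\{1,\dots,H\}$, and consider two hypotheses $H_0,H_1$ under which $Z_t$ has distributions $P^{(0)}_{Z_t}\ll P^{(1)}_{Z_t}$ with $\chi^2(P^{(0)}_{Z_t}\|P^{(1)}_{Z_t})=\Delta^2<\infty$, and under which, for $u\in\{t,\dots,H-1\}$, $Z_{u+1}$ given $Z_t,\dots,Z_u$ is distributed as $K_u(\cdot\mid Z_u)$ for Markov kernels $K_u$ common to both hypotheses with $\eta_{\chi^2}(K_u)\le\eta<1$. Let $R=g(Z_H)\in\{0,1\}$ for a fixed function $g$, and let $R^{1:n}$ denote $n$ i.i.d. samples of $R$ (drawn under $H_i$ when hypothesis $H_i$ holds, with $\mathbb{P}_i$ the corresponding probability). Fix $\epsilon\in(0,1/2)$. Then $$\inf_{\psi}\max_{i\in\{0,1\}}\mathbb{P}_i\big(\psi(R^{1:n})\neq i\big)\ \ge\ \frac12\left(1-\sqrt{\frac{(1+\eta^{H-t}\Delta^2)^n-1}{2}}\right),$$ where the infimum is over all tests $\psi:\{0,1\}^n\to\{0,1\}$. In particular, if $$n\le \frac{\ln\big(1+2(1-2\epsilon)^2\big)}{\eta^{H-t}\Delta^2},$$ then every test $\psi$ has $\max_{i\in\{0,1\}}\mathbb{P}_i(\psi(R^{1:n})\neq i)\ge\epsilon$.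
   Context: For distributions $P\ll Q$, $\chi^2(P\|Q)=\int (dP/dQ-1)^2\,dQ$. For a Markov kernel $K$, $PK$ is the pushforward $\int K(\cdot\mid x)\,dP(x)$, and the $\chi^2$-contraction coefficient is $\eta_{\chi^2}(K)=\sup\{\chi^2(PK\|QK)/\chi^2(P\|Q): P\ll Q,\ 0<\chi^2(P\|Q)<\infty\}$. *)

(* Defs.v *)
From HB Require Import structures.
From mathcomp Require Import all_boot all_order all_algebra.
From mathcomp Require Import all_classical all_reals all_analysis.

Set Implicit Arguments.
Unset Strict Implicit.
Unset Printing Implicit Defensive.
Import Order.TTheory GRing.Theory Num.Theory.

Local Open Scope classical_set_scope.
Local Open Scope ring_scope.

Section kernel_pushforward.
Local Open Scope ereal_scope.
Context {R : realType} {d d' : measure_display}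
  {X : measurableType d} {Y : measurableType d'}.
Variables (K : R.-pker X ~> Y) (P : probability X R).

Definition kpush (A : set Y) : \bar R := \int[P]_x K x A.

Let kpush0 : kpush set0 = 0.
Proof.
by rewrite /kpush (eq_integral (cst 0)) ?integral0// => y _; rewrite measure0.
Qed.

Let kpush_ge0 A : 0 <= kpush A. Proof. exact: integral_ge0. Qed.

Let kpush_sigma_additive : semi_sigma_additive kpush.
Proof.
move=> U mU tU mUU; rewrite [X in _ --> X](_ : _ =
  \int[P]_y (\sum_(n <oo) K y (U n))); last first.
  apply: eq_integral => V _.
  by apply/esym/cvg_lim => //; exact/measure_semi_sigma_additive.
apply/cvg_closeP; split.
  by apply: is_cvg_nneseries => n _ _; exact: integral_ge0.
rewrite closeE// integral_nneseries// => n.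
exact: (measurable_kernel K _ (mU n)).
Qed.

HB.instance Definition _ := isMeasure.Build _ _ R
  kpush kpush0 kpush_ge0 kpush_sigma_additive.

Let kpush_setT : kpush [set: Y] = 1%E.
Proof.
rewrite /kpush (eq_integral (cst 1)).
  by rewrite integral_cst//= probability_setT mule1.
by move=> x _; rewrite prob_kernel.
Qed.

HB.instance Definition _ := Measure_isProbability.Build _ _ R
  kpush kpush_setT.

End kernel_pushforward.

Section chi2_def.
Local Open Scope ereal_scope.
Local Open Scope charge_scope.
Context {R : realType} {d : measure_display} {T : measurableType d}.

Definition chi2 (P Q : probability T R) : \bar R :=
  if pselect (P `<< Q) is left _ then
    \int[Q]_x ((('d (charge_of_finite_measure P) '/d Q) x - 1)
               * (('d (charge_of_finite_measure P) '/d Q) x - 1))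
  else +oo.

End chi2_def.

Section eta_def.
Local Open Scope ereal_scope.
Context {R : realType} {d : measure_display} {T : measurableType d}.

Definition eta_chi2 (K : R.-pker T ~> T) : \bar R :=
  ereal_sup [set r | exists P Q : probability T R,
    [/\ P `<< Q, 0 < chi2 P Q, chi2 P Q < +oo &
        r = chi2 (kpush K P) (kpush K Q) * ((fine (chi2 P Q))^-1)%:E]].

End eta_def.

Definition iid_bernoulli_pmf {R : realType} (n : nat) (p : R)
    (x : {ffun 'I_n -> bool}) : R :=
  \prod_(k < n) (if x k then p else 1 - p).

Definition test_error {R : realType} (n : nat) (p : R)
    (psi : {ffun 'I_n -> bool} -> bool) (b : bool) : R :=
  \sum_(x : {ffun 'I_n -> bool} | psi x != b) iid_bernoulli_pmf p x.

Arguments iid_bernoulli_pmf {R} n p x.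
Arguments test_error {R} n p psi b.

(* Main.v *)
Require Import Defs.
From HB Require Import structures.
From mathcomp Require Import all_boot all_order all_algebra.
From mathcomp Require Import all_classical all_reals all_analysis.
From mathcomp Require Import measurable_realfun.
From mathcomp Require Import ring lra.
Import Order.TTheory GRing.Theory Num.Theory.
Local Open Scope classical_set_scope.
Local Open Scope ring_scope.
Section fin.
Context {R : realType}.

Definition qb (p : R) (b : bool) : R := if b then p else 1 - p.

Lemma sum_prod_ffun n (F : bool -> R) :
  \sum_(x : {ffun 'I_n -> bool}) \prod_(k < n) F (x k) = (F true + F false) ^+ n.
Proof.
by rewrite -(bigA_distr_bigA (fun (_ : 'I_n) b => F b)) /= prodr_const card_ord big_bool.
Qed.

Lemma sum_pmf n (p : R) : \sum_x iid_bernoulli_pmf n p x = 1.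
Proof.
rewrite /iid_bernoulli_pmf (sum_prod_ffun n (qb p)) /qb.
by rewrite addrC subrK expr1n.
Qed.

Lemma sum_ratio n (p0 p1 : R) :
  \sum_x (iid_bernoulli_pmf n p0 x ^+ 2 / iid_bernoulli_pmf n p1 x)
  = (p0 ^+ 2 / p1 + (1 - p0) ^+ 2 / (1 - p1)) ^+ n.
Proof.
rewrite -(sum_prod_ffun n (fun b => qb p0 b ^+ 2 / qb p1 b)).
apply: eq_bigr => x _; rewrite /iid_bernoulli_pmf prodf_div prodrXl.
by congr (_ ^+ 2 / _); apply: eq_bigr => k _; case: (x k).
Qed.


Lemma fin_main n (p0 p1 x : R) (psi : {ffun 'I_n -> bool} -> bool) :
  0 <= x ->
  (p0 = p1 \/ [/\ 0 < p1 < 1 &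
      (p0 - p1) ^+ 2 / p1 + (p0 - p1) ^+ 2 / (1 - p1) <= x]) ->
  1 / 2 * (1 - Num.sqrt (((1 + x) ^+ n - 1) / 2)) <=
  Num.max (test_error n p0 psi false) (test_error n p1 psi true).
Proof.
move=> x0 H.
set P0 := iid_bernoulli_pmf n p0; set P1 := iid_bernoulli_pmf n p1.
set a0 := \sum_(y | psi y) P0 y; set a1 := \sum_(y | psi y) P1 y.
have e0 : test_error n p0 psi false = a0.
  by apply: eq_bigl => y; case: (psi y).
have e1 : test_error n p1 psi true = 1 - a1.
  rewrite -(sum_pmf n p1) (bigID (fun y => psi y)) /= addrC addrK.
  by apply: eq_bigl => y; case: (psi y).
rewrite e0 e1.
have Ymon : 0 <= Num.sqrt (((1 + x) ^+ n - 1) / 2) by apply: sqrtr_ge0.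
suff : 1 - Num.sqrt (((1 + x) ^+ n - 1) / 2) <= 1 + (a0 - a1).
  move=> h; rewrite le_max; apply/orP.
  have [le|lt] := lerP (1 - a1) a0.
    by left; lra.
  by right; lra.
case: H => [e|[/andP [p10 p11] hc]].
  by rewrite /a0 /a1 /P0 /P1 e subrr addr0 lerBlDr lerDl.
have P1pos y : 0 < P1 y.
  rewrite /P1 /iid_bernoulli_pmf; apply: prodr_gt0 => k _.
  by case: (y k) => //; rewrite subr_gt0.
set s := fun y => if psi y then 1 else -1 : R.
set D := fun y => P0 y - P1 y.
set T := \sum_y s y * D y.
set S := \sum_y (D y ^+ 2 / P1 y).
have sumD : \sum_y D y = 0.
  by rewrite /D sumrB /P0 /P1 !sum_pmf subrr.
have hT : T = 2 * (a0 - a1).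
  rewrite /T (bigID (fun y => psi y)) /=.
  have h1 : \sum_(i | psi i) s i * D i = a0 - a1.
    by rewrite /a0 /a1 -sumrB; apply: eq_bigr => y py; rewrite /s py mul1r.
  have h2 : \sum_(i | ~~ psi i) s i * D i = - \sum_(i | ~~ psi i) D i.
    rewrite -sumrN; apply: eq_bigr => z /negbTE pz; rewrite /s pz mulN1r.
    done.
  have := sumD; rewrite (bigID (fun y => psi y)) /=.
  have -> : \sum_(i | psi i) D i = a0 - a1 by rewrite /a0 /a1 -sumrB.
  move=> h; rewrite h1 h2; lra.
have hTS : T ^+ 2 <= S.
  have h : \sum_y P1 y * (D y / P1 y - T * s y) ^+ 2 = S - 2 * T * T + T ^+ 2.
    rewrite (eq_bigr (fun y => D y ^+ 2 / P1 y - 2 * T * (s y * D y) + T ^+ 2 * P1 y)); last first.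
      move=> y _.
      have s2 : s y ^+ 2 = 1 by rewrite /s; case: (psi y); rewrite ?sqrrN expr1n.
      have p1n : P1 y != 0 by rewrite gt_eqF.
      have sq : (T * s y) ^+ 2 = T ^+ 2 by rewrite exprMn s2 mulr1.
      rewrite sqrrB sq; field.
      done.
    rewrite big_split /= sumrB -mulr_sumr -mulr_sumr /P1 sum_pmf mulr1.
    done.
  have : 0 <= \sum_y P1 y * (D y / P1 y - T * s y) ^+ 2.
    by apply: sumr_ge0 => y _; rewrite mulr_ge0 ?sqr_ge0 ?ltW.
  rewrite h; lra.
set c := (p0 - p1) ^+ 2 / p1 + (p0 - p1) ^+ 2 / (1 - p1).
have c0 : 0 <= c.
  by rewrite addr_ge0 // divr_ge0 ?sqr_ge0 // ?ltW // subr_gt0.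
have hS : S = (1 + c) ^+ n - 1.
  rewrite /S (eq_bigr (fun y => P0 y ^+ 2 / P1 y - 2 * P0 y + P1 y)); last first.
    move=> y _; have p1n : P1 y != 0 by rewrite gt_eqF.
    rewrite /D; field; done.
  rewrite big_split /= sumrB -mulr_sumr /P0 /P1 !sum_pmf sum_ratio mulr1.
  have -> : p0 ^+ 2 / p1 + (1 - p0) ^+ 2 / (1 - p1) = 1 + c.
    have p1n : p1 != 0 by rewrite gt_eqF.
    have p1n' : 1 - p1 != 0 by rewrite gt_eqF // subr_gt0.
    rewrite /c; field; by rewrite p1n p1n'.
  lra.
have hSY : S <= (1 + x) ^+ n - 1.
  have hcx : c <= x by []. rewrite hS lerD2r; apply: lerXn2r; rewrite ?nnegrE; lra.
have S0 : 0 <= S by apply: le_trans hTS; exact: sqr_ge0.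
have Y0 : 0 <= ((1 + x) ^+ n - 1) by apply: le_trans hSY.
have h1 : `|T| <= Num.sqrt S by rewrite -sqrtr_sqr ler_sqrt.
have h2 : Num.sqrt S <= Num.sqrt ((1 + x) ^+ n - 1) by rewrite ler_sqrt.
have h3 : Num.sqrt ((1 + x) ^+ n - 1) <= 2 * Num.sqrt (((1 + x) ^+ n - 1) / 2).
  rewrite -ler_sqr ?nnegrE ?mulr_ge0 ?sqrtr_ge0 // exprMn !sqr_sqrtr //; last first.
    by rewrite divr_ge0.
  lra.
have h4 : - T <= `|T| by rewrite -normrN ler_norm.
lra.
Qed.


Lemma eps_bound n (x eps : R) : 0 <= x -> 0 < eps < 1 / 2 ->
  n%:R * x <= ln (1 + 2 * (1 - 2 * eps) ^+ 2) ->
  eps <= 1 / 2 * (1 - Num.sqrt (((1 + x) ^+ n - 1) / 2)).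
Proof.
move=> x0 /andP [e0 e1] hn.
have ypos : 0 < 1 + 2 * (1 - 2 * eps) ^+ 2.
  have := sqr_ge0 (1 - 2 * eps); lra.
have h1 : (1 + x) ^+ n <= 1 + 2 * (1 - 2 * eps) ^+ 2.
  apply: (@le_trans _ _ (expR x ^+ n)).
    by apply: lerXn2r; rewrite ?nnegrE ?expR_ge0 ?expR_ge1Dx //; lra.
  rewrite -expRM_natl -[X in _ <= X]lnK ?posrE // ler_expR //.
have h2 : Num.sqrt (((1 + x) ^+ n - 1) / 2) <= 1 - 2 * eps.
  rewrite -[X in _ <= X]gtr0_norm ?subr_gt0; last lra.
  rewrite -sqrtr_sqr ler_sqrt ?sqr_ge0 //; lra.
lra.
Qed.

End fin.
Section dpi.
Context {R : realType} {d : measure_display} {T : measurableType d}.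
Local Open Scope ereal_scope.
Local Open Scope charge_scope.

Lemma key_id (u v : R) : (u ^+ 2 / v = (u / v) * 2 * u - (u / v) ^+ 2 * v)%R.
Proof.
have [->|v0] := eqVneq v 0%R.
  by rewrite invr0 !mulr0 !mul0r subr0.
by field.
Qed.

Lemma dpi (P Q : probability T R) (PQ : P `<< Q) (A : set T) (mA : measurable A) :
  (((fine (P A) - fine (Q A)) ^+ 2 / fine (Q A)
   + (fine (P A) - fine (Q A)) ^+ 2 / (1 - fine (Q A)))%:E <= chi2 P Q).
Proof.
rewrite /chi2; case: pselect => [_|//].
set f := 'd (charge_of_finite_measure P) '/d Q.
have cPQ : charge_of_finite_measure P `<< Q := PQ.
have fin x : f x \is a fin_num by apply: Radon_Nikodym_fin_num.
have intf : Q.-integrable setT f by apply: Radon_Nikodym_integrable.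
have mf : measurable_fun setT f by case/integrableP: intf.
have fE E : measurable E -> \int[Q]_(x in E) f x = P E.
  by move=> mE; rewrite -Radon_Nikodym_integral.
set h := fun x => (f x - 1) * (f x - 1).
have h0 x : 0 <= h x by rewrite /h -expe2 sqre_ge0.
have mh : measurable_fun setT h.
  by apply: emeasurable_funM; apply: emeasurable_funB => //; exact: measurable_cst.
have [->|hfin] := eqVneq (\int[Q]_x h x) +oo; first by rewrite leey.
have inth : Q.-integrable setT h.
  apply/integrableP; split => //.
  under eq_integral do rewrite gee0_abs //.
  by rewrite ltey.
have key E (al : R) : measurable E ->
    ((al * 2 * (fine (P E) - fine (Q E)) - al ^+ 2 * fine (Q E))%:E
     <= \int[Q]_(x in E) h x).
  move=> mE.
  have intfE : Q.-integrable E f by apply: integrableS intf.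
  have intc (r : R) : Q.-integrable E (fun _ => r%:E).
    exact: finite_measure_integrable_cst.
  have int1 : Q.-integrable E (fun x => f x - 1).
    exact: (integrableB mE intfE (intc 1%R)).
  have int2 : Q.-integrable E (fun x => (al * 2)%:E * (f x - 1)).
    exact: integrableZl.
  apply: (@le_trans _ _ (\int[Q]_(x in E) ((al * 2)%:E * (f x - 1) - (al ^+ 2)%:E))).
    rewrite (integralB mE int2 (intc _)) integralZl //.
    rewrite (integralB mE intfE (intc _)) fE //.
    rewrite !integral_cst //.
    have [qe hq] : exists qe, Q E = qe%:E.
      by exists (fine (Q E)); rewrite fineK // fin_num_measure.
    have [pe hp] : exists pe, P E = pe%:E.
      by exists (fine (P E)); rewrite fineK // fin_num_measure.
    rewrite !hq !hp /=.
    rewrite (_ : 1 * Q E = qe%:E); last by rewrite mul1e; exact: hq.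
    rewrite (_ : (al ^+ 2)%:E * Q E = (al ^+ 2 * qe)%:E); last first.
      by rewrite (EFinM (al ^+ 2) qe); apply: congr1; exact: hq.
    by rewrite -EFinB.
  apply: le_integral => //.
    by apply: integrableB => //; exact: intc.
  by apply: integrableS inth.
  move=> x _; rewrite /h -(fineK (fin x)) -(EFinB _ 1) -EFinM -EFinM -EFinB lee_fin.
  have := sqr_ge0 (fine (f x) - 1 - al)%R; nra.
have PA := fineK (fin_num_measure P _ mA).
have QA := fineK (fin_num_measure Q _ mA).
have mCA : measurable (~` A) by apply: measurableC.
have PCA : fine (P (~` A)) = (1 - fine (P A))%R.
  by rewrite probability_setC // -PA -EFinB.
have QCA : fine (Q (~` A)) = (1 - fine (Q A))%R.
  by rewrite probability_setC // -QA -EFinB.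
have h0' : forall x, (A `|` ~` A) x -> 0 <= h x by move=> x _; exact: h0.
have mh' : measurable_fun (A `|` ~` A) h by rewrite setUv.
have dj : [disjoint A & ~` A] by rewrite disj_set2E setICr.
rewrite -(setUv A) (ge0_integral_setU _ mA mCA mh' h0' dj).
set a := fine (P A); set b := fine (Q A).
have k1 := key A ((a - b) / b)%R mA.
have k2 := key (~` A) ((b - a) / (1 - b))%R mCA.
rewrite PCA QCA in k2.
apply: le_trans (leeD k1 k2).
rewrite -EFinD lee_fin (key_id (a - b) b) (key_id (a - b) (1 - b)).
rewrite -/a -/b.
rewrite (_ : (b - a) / (1 - b) * 2 * (1 - a - (1 - b)) = (a - b) / (1 - b) * 2 * (a - b))%R; last by ring.
rewrite (_ : ((b - a) / (1 - b)) ^+ 2 = ((a - b) / (1 - b)) ^+ 2)%R; last by ring.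
lra.
Qed.
End dpi.
Section chain.
Context {R : realType} {dO : measure_display} {Omega : measurableType dO}
  {dZ : measure_display} {Zsp : measurableType dZ}.
Context (Pr : bool -> probability Omega R) (Z : nat -> {mfun Omega >-> Zsp})
  (t : nat) (K : nat -> R.-pker Zsp ~> Zsp).
Local Open Scope ereal_scope.

Fixpoint Mc (i : bool) (k : nat) : probability Zsp R :=
  match k with
  | 0 => distribution (Pr i) (Z t)
  | k'.+1 => kpush (K (t + k')%N) (Mc i k')
  end.

Lemma Mc_eq (H : nat) (Hmarkov : forall (i : bool) (u : nat), (t <= u < H)%N ->
     forall (A : nat -> set Zsp) (B : set Zsp),
       (forall v, measurable (A v)) -> measurable B ->
       Pr i ((\bigcap_(v in [set v | (t <= v <= u)%N]) (Z v @^-1` A v))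
             `&` (Z u.+1 @^-1` B))
       = (\int[Pr i]_(w in \bigcap_(v in [set v | (t <= v <= u)%N]) (Z v @^-1` A v))
            K u (Z u w) B)%E) i k :
  (t + k <= H)%N -> forall B, measurable B ->
  Mc i k B = distribution (Pr i) (Z (t + k)%N) B.
Proof.
elim: k => [|k IH] hk B mB; first by rewrite addn0.
rewrite /= /kpush.
rewrite (eq_measure_integral (distribution (Pr i) (Z (t + k)%N))); last first.
  by move=> A mA _; apply: IH => //; apply: leq_trans hk; rewrite addnS.
rewrite ge0_integral_distribution //; last exact: measurable_kernel.
have := Hmarkov i (t + k)%N _ (fun _ => setT) B (fun _ => measurableT) mB.
have hc : \bigcap_(v in [set v | (t <= v <= t + k)%N]) (Z v @^-1` [set: Zsp]) = setT.
  by apply/seteqP; split => // x _ v _.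
rewrite hc setTI addnS => h; rewrite /distribution /pushforward -h //.
by rewrite leq_addr /= -addnS.
Qed.


Lemma chi2_ge0 (P Q : probability Zsp R) : 0 <= chi2 P Q.
Proof.
rewrite /chi2; case: pselect => _ //.
by apply: integral_ge0 => x _; rewrite -expe2 sqre_ge0.
Qed.

Lemma chi2_dom (P Q : probability Zsp R) : chi2 P Q < +oo -> P `<< Q.
Proof. by rewrite /chi2; case: pselect => // _; rewrite ltxx. Qed.

Lemma chi2_0_eq (P Q : probability Zsp R) : chi2 P Q <= 0 ->
  forall B, measurable B -> P B = Q B.
Proof.
move=> h0 B mB.
have PQ : P `<< Q by apply: chi2_dom; apply: le_lt_trans h0 _.
have := le_trans (@dpi _ _ _ P Q PQ B mB) h0; rewrite lee_fin.
have b0 : (0 <= fine (Q B))%R by apply: fine_ge0.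
have b1 : (fine (Q B) <= 1)%R.
  by rewrite -lee_fin fineK ?fin_num_measure // probability_le1.
set a := fine (P B); set b := fine (Q B) => hc.
have t1 : (0 <= (a - b) ^+ 2 / b)%R by rewrite divr_ge0 ?sqr_ge0.
have t2 : (0 <= (a - b) ^+ 2 / (1 - b))%R by rewrite divr_ge0 ?sqr_ge0 ?subr_ge0.
have ab : a = b.
  have [b00|bpos] := eqVneq b 0%R.
    move: t2 hc; rewrite b00 !subr0 invr0 mulr0 add0r invr1 mulr1 => t2 hc.
    have : (a ^+ 2 = 0)%R by lra.
    by move/eqP; rewrite sqrf_eq0 => /eqP.
  have bp : (0 < b)%R by rewrite lt_neqAle eq_sym bpos.
  have : ((a - b) ^+ 2 / b = 0)%R by lra.
  move/eqP; rewrite mulf_eq0 invr_eq0 (negbTE bpos) orbF sqrf_eq0 subr_eq0.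
  by move/eqP.
by rewrite -(fineK (fin_num_measure P _ mB)) -(fineK (fin_num_measure Q _ mB)) -/a -/b ab.
Qed.

Lemma Mc_chain (H : nat) (eta Delta : R)
  (Hchi : chi2 (distribution (Pr false) (Z t)) (distribution (Pr true) (Z t))
          = (Delta ^+ 2)%:E)
  (Heta0 : (0 <= eta)%R)
  (HK : forall u, (t <= u < H)%N -> (eta_chi2 (K u) <= eta%:E)%E) k :
  (t + k <= H)%N ->
  (forall B, measurable B -> Mc false k B = Mc true k B) \/
  chi2 (Mc false k) (Mc true k) <= (eta ^+ k * Delta ^+ 2)%:E.
Proof.
elim: k => [|k IH] hk.
  by right; rewrite /= Hchi expr0 mul1r.
have hk' : (t + k <= H)%N by apply: leq_trans hk; rewrite addnS.
have hu : (t <= t + k < H)%N by rewrite leq_addr /= -addnS.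
have eqcase : (forall B, measurable B -> Mc false k B = Mc true k B) ->
    (forall B, measurable B -> Mc false k.+1 B = Mc true k.+1 B).
  move=> he B mB; rewrite /= /kpush.
  by apply: (eq_measure_integral (Mc true k)) => A mA _; apply: he.
case: (IH hk') => [he|hc]; first by left; exact: eqcase.
have C0 := chi2_ge0 (Mc false k) (Mc true k).
have [Cz|Cpos] := eqVneq (chi2 (Mc false k) (Mc true k)) 0.
  by left; apply: eqcase; apply: chi2_0_eq; rewrite Cz.
have Cp : 0 < chi2 (Mc false k) (Mc true k) by rewrite lt_neqAle eq_sym Cpos.
have Cfin : chi2 (Mc false k) (Mc true k) < +oo by apply: le_lt_trans hc _; rewrite ltry.
right.
set C := chi2 (Mc false k) (Mc true k) in C0 Cp Cfin hc *.
have dom := @chi2_dom (Mc false k) (Mc true k) Cfin.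
have hsup : chi2 (Mc false k.+1) (Mc true k.+1) * ((fine C)^-1)%:E <= eta%:E.
  apply: le_trans (HK _ hu); apply: ereal_sup_ubound.
  by exists (Mc false k), (Mc true k); split.
have cpos : (0 < fine C)%R by apply: fine_gt0; rewrite Cp Cfin.
have Ce : C = (fine C)%:E by rewrite fineK // ge0_fin_numE.
move: hsup (chi2_ge0 (Mc false k.+1) (Mc true k.+1)).
case: (chi2 (Mc false k.+1) (Mc true k.+1)) => [r| |] //.
- rewrite -EFinM !lee_fin => hr r0.
  have : (r <= eta * fine C)%R by rewrite -ler_pdivrMr.
  move=> h; apply: le_trans h _.
  rewrite exprS -mulrA ler_wpM2l //.
  by rewrite -lee_fin -Ce.
- move=> + _; rewrite gt0_mulye ?leye_eq // lte_fin invr_gt0 //.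
Qed.

End chain.

Lemma dom_null {R : realType} {d : measure_display} {T : measurableType d}
  (P Q : probability T R) (A : set T) :
  P `<< Q -> measurable A -> Q A = 0%E -> P A = 0%E.
Proof.
move=> PQ mA QA0; apply: (PQ A) => //.
move=> A' mA' sub; apply/eqP; rewrite eq_le measure_ge0 andbT -QA0.
by apply: le_measure => //; rewrite inE.
Qed.

Theorem corollary3 (R : realType)
  (dO : measure_display) (Omega : measurableType dO)
  (dZ : measure_display) (Zsp : measurableType dZ)
  (Pr : bool -> probability Omega R)      (* Pr false = P_0 (H_0), Pr true = P_1 (H_1) *)
  (Z : nat -> {mfun Omega >-> Zsp})       (* the process Z_0, ..., Z_H *)
  (H t : nat) (Ht : (1 <= t <= H)%N)
  (Delta : R) (HDelta : 0 <= Delta)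
  (Habs : distribution (Pr false) (Z t) `<< distribution (Pr true) (Z t))
  (Hchi : chi2 (distribution (Pr false) (Z t)) (distribution (Pr true) (Z t))
          = (Delta ^+ 2)%:E)
  (K : nat -> R.-pker Zsp ~> Zsp) (eta : R)
  (Heta0 : 0 <= eta) (Heta1 : eta < 1)
  (HK : forall u, (t <= u < H)%N -> (eta_chi2 (K u) <= eta%:E)%E)
  (Hmarkov : forall (i : bool) (u : nat), (t <= u < H)%N ->
     forall (A : nat -> set Zsp) (B : set Zsp),
       (forall v, measurable (A v)) -> measurable B ->
       Pr i ((\bigcap_(v in [set v | (t <= v <= u)%N]) (Z v @^-1` A v))
             `&` (Z u.+1 @^-1` B))
       = (\int[Pr i]_(w in \bigcap_(v in [set v | (t <= v <= u)%N]) (Z v @^-1` A v))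
            K u (Z u w) B)%E)
  (g : Zsp -> bool) (mg : measurable (g @^-1` [set true]))
  (eps : R) (Heps : 0 < eps < 1 / 2) :
  let p (i : bool) : R := fine (Pr i (Z H @^-1` (g @^-1` [set true]))) in
  forall n : nat,
    ((1 / 2 * (1 - Num.sqrt (((1 + eta ^+ (H - t) * Delta ^+ 2) ^+ n - 1) / 2)))%:E
       <= ereal_inf [set (Num.max (test_error n (p false) psi false)
                                  (test_error n (p true) psi true))%:E
                    | psi in [set: {ffun 'I_n -> bool} -> bool]])%E
    /\
    (n%:R * (eta ^+ (H - t) * Delta ^+ 2) <= ln (1 + 2 * (1 - 2 * eps) ^+ 2) ->
     forall psi : {ffun 'I_n -> bool} -> bool,
       eps <= Num.max (test_error n (p false) psi false)
                      (test_error n (p true) psi true)).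
Proof.
move=> p n.
set x := eta ^+ (H - t) * Delta ^+ 2.
have x0 : 0 <= x by rewrite mulr_ge0 ?exprn_ge0 ?sqr_ge0.
set A := g @^-1` [set true].
have tH : (t + (H - t) = H)%N by rewrite subnKC //; case/andP: Ht.
have pE i : p i = fine (Mc Pr Z t K i (H - t) A).
  by rewrite /p (@Mc_eq _ _ _ _ _ Pr Z t K H Hmarkov i (H - t)) ?tH.
have hyp : p false = p true \/
    [/\ 0 < p true < 1 &
      (p false - p true) ^+ 2 / p true + (p false - p true) ^+ 2 / (1 - p true) <= x].
  rewrite !pE.
  case: (@Mc_chain _ _ _ _ _ Pr Z t K H eta Delta Hchi Heta0 HK (H - t)); first by rewrite tH.
  move=> he; first by left; rewrite he.
  move=> hc.
  set P0 := Mc Pr Z t K false (H - t); set P1 := Mc Pr Z t K true (H - t).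
  fold P0 P1 in hc.
  have dom : P0 `<< P1 by apply: chi2_dom; apply: le_lt_trans hc _; rewrite ltry.
  have hd := le_trans (@dpi _ _ _ P0 P1 dom A mg) hc; rewrite lee_fin in hd.
  have b0 : 0 <= fine (P1 A) by apply: fine_ge0.
  have b1 : fine (P1 A) <= 1.
    by rewrite -lee_fin fineK ?fin_num_measure // probability_le1.
  have [bz|bnz] := eqVneq (fine (P1 A)) 0.
    left; rewrite bz.
    have : P1 A = 0%E by rewrite -(fineK (fin_num_measure P1 _ mg)) bz.
    by move/(@dom_null _ _ _ P0 P1 A dom mg) => ->.
  have [bo|bno] := eqVneq (fine (P1 A)) 1.
    left; rewrite bo.
    have mCA : measurable (~` A) by apply: measurableC.
    have : P1 (~` A) = 0%E.
      by rewrite probability_setC // -(fineK (fin_num_measure P1 _ mg)) bo subee.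
    move/(@dom_null _ _ _ P0 P1 (~` A) dom mCA); rewrite probability_setC // => h.
    have : P0 A = 1%E.
      move: h; rewrite -(fineK (fin_num_measure P0 _ mg)) -EFinB => /eqP.
      by rewrite eqe subr_eq0 => /eqP <-.
    by move=> ->.
  right; split => //.
  by rewrite lt_neqAle eq_sym bnz b0 /= lt_neqAle bno b1.
have main psi : 1 / 2 * (1 - Num.sqrt (((1 + x) ^+ n - 1) / 2)) <=
    Num.max (test_error n (p false) psi false) (test_error n (p true) psi true).
  exact: fin_main.
split.
  apply: le_ereal_inf_tmp => _ [psi _ <-].
  by rewrite lee_fin; exact: main.
move=> hn psi; apply: le_trans (main psi).
by apply: eps_bound.
Qed.
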